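(* Let $n=2r+1$, let $\pi$ be an irreducible generic unitarizable representation of $G_n$, and let $W_{v_m}$ be its normalized Howe vector of level $m$. Let $$g=\begin{pmatrix}0&a\\ b\omega_r&0\end{pmatrix}\begin{pmatrix}u_r&0&u_r\omega_ra'u\\0&1&0\\0&0&I_r\end{pmatrix},$$ where $a=\mathrm{diag}(a_1,\dots,a_{r+1})\in A_{r+1}$, $a'=\mathrm{diag}(a'_1,\dots,a'_r)\in A_r$, $b=\mathrm{diag}(b_1,\dots,b_r)\in A_r$, $u_r\in N_r$, $u\in N_r$ (the first factor has block sizes with $a$ in the upper right $(r+1)\times(r+1)$ position and $b\omega_r$ in the lower left $r\times r$ position). If $W_{v_m}(g)\ne0$, then $a_i/a_{i+1}\in1+\mathfrak p^m$ for $i=1,\dots,r$, the matrix $\begin{pmatrix}I_r&0&\omega_ra'u\\0&1&0\\0&0&I_r\end{pmatrix}$ lies in $J_{n,m}$, and $$W_{v_m}(g)=W_{v_m}\left(\begin{pmatrix}0&a\\ b\omega_r&0\end{pmatrix}\begin{pmatrix}u_r&0&0\\0&1&0\\0&0&I_r\end{pmatrix}\right).$$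
   Context: $F$ is a $p$-adic field, $\mathcal O$ its ring of integers, $\mathfrak p$ its maximal ideal, $\varpi$ a uniformizer; $\psi$ is a nontrivial additive character with conductor $\mathcal O$, extended to $N_n$ (upper triangular unipotent) by $\psi(u)=\psi(\sum u_{i,i+1})$. $A_k$ denotes diagonal matrices in $G_k=GL_k(F)$, $N_k$ upper triangular unipotent matrices, $\omega_k$ the $k\times k$ antidiagonal permutation matrix. Howe vectors: $K_n^m=I_n+M_n(\mathfrak p^m)$, $d=\mathrm{diag}(1,\varpi^2,\dots,\varpi^{2n-2})$, $J_{n,m}=d^mK_n^md^{-m}$, $N_{n,m}=N_n\cap J_{n,m}$, $\bar B_{n,m}=\bar B_n\cap J_{n,m}$ ($\bar B_n$ lower triangular Borel); $J_{n,m}=\bar B_{n,m}N_{n,m}$ and for $j=\bar b_jn_j$ put $\psi_m(j)=\psi(n_j)$. The normalized Howe vector of level $m$ is the unique (for $m$ large) $W_{v_m}\in\mathcal W(\pi,\psi)$ with $W_{v_m}(gj)=\psi_m(j)W_{v_m}(g)$ for all $g\in G_n$, $j\in J_{n,m}$, and $W_{v_m}(I_n)=1$. *)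

(* Defs.v *)
From HB Require Import structures.
From mathcomp Require Import all_boot all_order all_algebra.
Set Implicit Arguments. Unset Strict Implicit. Unset Printing Implicit Defensive.
Import Order.TTheory GRing.Theory Num.Theory.
Local Open Scope ring_scope.

Section PadicDefs.
Variables (F : fieldType) (O : pred F) (varpi : F).

Definition inpm (m : nat) (x : F) : bool := O (x / varpi ^+ m).

(* (F, O, varpi) is a p-adic field: a complete discretely valued field of
   characteristic 0 with finite residue field, valuation ring O, uniformizer varpi. *)
Definition padic_field : Prop :=
  (O 0 /\ O 1 /\ (forall x y, O x -> O y -> O (x - y)) /\
      (forall x y, O x -> O y -> O (x * y))) /\
  (O varpi /\ varpi != 0 /\ ~~ O varpi^-1) /\
  (forall x, x != 0 -> exists (k : int) (u : F),
          [/\ O u, O u^-1 & x = varpi ^ k * u]) /\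
  (exists s : seq F, forall x, O x -> exists2 y, y \in s & O ((x - y) / varpi)) /\
  (forall k : nat, k.+1%:R != 0 :> F) /\
  (forall x : nat -> F,
     (forall k, exists N, forall i j, (N <= i)%N -> (N <= j)%N -> inpm k (x i - x j)) ->
     exists l, forall k, exists N, forall i, (N <= i)%N -> inpm k (x i - l)).

Variable C : numClosedFieldType.
Variable psi : F -> C.

Definition add_char_conductor_O : Prop :=
  [/\ (forall x y, psi (x + y) = psi x * psi y),
      (forall x, O x -> psi x = 1) &
      (exists x, O (varpi * x) /\ psi x != 1)].

Variable n : nat.

Definition upper_unipotent (u : 'M[F]_n) : Prop :=
  (forall i j : 'I_n, (j < i)%N -> u i j = 0) /\ (forall i, u i i = 1).

Definition lower_borel (b : 'M[F]_n) : Prop :=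
  b \in unitmx /\ (forall i j : 'I_n, (i < j)%N -> b i j = 0).

Definition psiN (u : 'M[F]_n) : C :=
  psi (\sum_(i < n) \sum_(j < n | nat_of_ord j == i.+1) u i j).

Definition inK (k : nat) (x : 'M[F]_n) : Prop :=
  forall i j : 'I_n, inpm k (x i j - (i == j)%:R).

Definition dpow (m : nat) : 'M[F]_n := diag_mx (\row_(i < n) varpi ^+ (2 * i * m)).
Definition dpowinv (m : nat) : 'M[F]_n := diag_mx (\row_(i < n) (varpi ^+ (2 * i * m))^-1).

Definition inJ (m : nat) (j : 'M[F]_n) : Prop := inK m (dpowinv m *m j *m dpow m).

Variable V : lmodType C.
Variable rho : 'M[F]_n -> V -> V.

Definition smooth_rep : Prop :=
  [/\ (forall g, g \in unitmx -> forall (c : C) v w, rho g (c *: v + w) = c *: rho g v + rho g w),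
      (forall v, rho 1%:M v = v),
      (forall g h, g \in unitmx -> h \in unitmx -> forall v, rho (g *m h) v = rho g (rho h v)) &
      (forall v, exists k, (0 < k)%N /\ forall x, inK k x -> rho x v = v)].

Definition irreducible_rep : Prop :=
  (exists v : V, v != 0) /\
  forall S : pred V,
    S 0 -> (forall (c : C) v w, S v -> S w -> S (c *: v + w)) ->
    (forall g v, g \in unitmx -> S v -> S (rho g v)) ->
    (forall v, S v -> v = 0) \/ (forall v, S v).

Definition unitarizable : Prop :=
  exists h : V -> V -> C,
    [/\ (forall (c : C) v w x, h (c *: v + w) x = c * h v x + h w x),
        (forall x y, h x y = (h y x)^*),
        (forall v, v != 0 -> 0 < h v v) &
        (forall g v w, g \in unitmx -> h (rho g v) (rho g w) = h v w)].

(* lam is a nonzero (psi-)Whittaker functional; its existence = genericity *)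
Definition whittaker_functional (lam : V -> C) : Prop :=
  [/\ (forall (c : C) v w, lam (c *: v + w) = c * lam v + lam w),
      (exists v, lam v != 0) &
      (forall u v, upper_unipotent u -> lam (rho u v) = psiN u * lam v)].

(* W is in the Whittaker model W(pi,psi) and is a normalized Howe vector of
   level m: W(gj) = psi_m(j) W(g) for j = bbar n in J_{n,m} = Bbar_{n,m} N_{n,m},
   psi_m(j) = psi(n), and W(I_n) = 1. *)
Definition howe_vector (lam : V -> C) (m : nat) (W : 'M[F]_n -> C) : Prop :=
  [/\ (exists v, forall g, g \in unitmx -> W g = lam (rho g v)),
      W 1%:M = 1 &
      (forall g bb nn, g \in unitmx ->
          lower_borel bb -> inJ m bb -> upper_unipotent nn -> inJ m nn ->
          W (g *m (bb *m nn)) = psiN nn * W g)].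

End PadicDefs.

Definition omega (F : fieldType) (r : nat) : 'M[F]_r :=
  \matrix_(i < r, j < r) (nat_of_ord i + nat_of_ord j == r.-1)%:R.

Lemma sz3 (r : nat) : (r + (1 + r) = r.*2.+1)%N.
Proof. by rewrite add1n addnS -addnn. Qed.
Lemma sz2 (r : nat) : (r.+1 + r = r.*2.+1)%N.
Proof. by rewrite addSn -addnn. Qed.
Lemma sz2' (r : nat) : (r + r.+1 = r.*2.+1)%N.
Proof. by rewrite addnS -addnn. Qed.

(* [[A, 0, B], [0, 1, 0], [0, 0, I_r]] with block sizes r, 1, r *)
Definition blk3 (F : fieldType) (r : nat) (A B : 'M[F]_r) : 'M[F]_(r.*2.+1) :=
  castmx (sz3 r, sz3 r) (block_mx A (row_mx 0 B) 0 1%:M).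

(* [[0, a], [b omega_r, 0]], rows split r+1 | r, columns split r | r+1 *)
Definition antiblk (F : fieldType) (r : nat) (a : 'rV[F]_(r.+1)) (b : 'rV[F]_r) :
  'M[F]_(r.*2.+1) :=
  castmx (sz2 r, sz2' r) (block_mx 0 (diag_mx a) (diag_mx b *m omega F r) 0).

(* Main.v *)
Require Import Defs.
From HB Require Import structures.
From mathcomp Require Import all_boot all_order all_algebra.
From mathcomp Require Import zify ring.
Import Order.TTheory GRing.Theory Num.Theory.
Local Open Scope ring_scope.

Module Helpers.
Set Implicit Arguments. Unset Strict Implicit. Unset Printing Implicit Defensive.

Lemma castmx_mul (F : fieldType) m m' n n' p p' (e1 : m = m') (e2 : n = n') (e3 : p = p')
  (A : 'M[F]_(m, n)) (B : 'M[F]_(n, p)) :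
  castmx (e1, e2) A *m castmx (e2, e3) B = castmx (e1, e3) (A *m B).
Proof. by case: m' / e1; case: n' / e2; case: p' / e3; rewrite !castmx_id. Qed.

Lemma castmx1 (F : fieldType) m m' (e : m = m') :
  castmx (e, e) (1%:M : 'M[F]_m) = 1%:M.
Proof. by case: m' / e; rewrite castmx_id. Qed.

Section Blk.
Variables (F : fieldType) (r : nat).
Local Notation n := (r.*2.+1).

Lemma ordn (p : 'I_n) : ((p : nat) <= r + r)%N.
Proof. have h := ltn_ord p; have e : (r.*2 = r + r)%N by rewrite addnn. lia. Qed.

Lemma blk3M (A B A' B' : 'M[F]_r) :
  blk3 A B *m blk3 A' B' = blk3 (A *m A') (A *m B' + B).
Proof.
rewrite /blk3 castmx_mul mulmx_block.
by rewrite !(mulmx0, mul0mx, mulmx1, mul1mx, addr0, add0r, mul_mx_row, add_row_mx).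
Qed.

Lemma blk3_1 : blk3 (1%:M : 'M[F]_r) 0 = 1%:M.
Proof. by rewrite /blk3 row_mx0 -scalar_mx_block castmx1. Qed.

Lemma blk3_ul (A B : 'M[F]_r) (p q : 'I_n) (p' q' : 'I_r) :
  (p : nat) = (p' : nat) -> (q : nat) = (q' : nat) -> blk3 A B p q = A p' q'.
Proof.
move=> hp hq; rewrite /blk3 castmxE.
have -> : cast_ord (esym (sz3 r)) p = lshift (1 + r) p' by apply/val_inj.
have -> : cast_ord (esym (sz3 r)) q = lshift (1 + r) q' by apply/val_inj.
by rewrite block_mxEul.
Qed.

Lemma blk3_um (A B : 'M[F]_r) (p q : 'I_n) :
  ((p : nat) < r)%N -> (q : nat) = r -> blk3 A B p q = 0.
Proof.
move=> hp hq; rewrite /blk3 castmxE.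
have -> : cast_ord (esym (sz3 r)) p = lshift (1 + r) (Ordinal hp) by apply/val_inj.
have -> : cast_ord (esym (sz3 r)) q = rshift r (lshift r (ord0 : 'I_1)) by apply/val_inj; rewrite /= hq addn0.
by rewrite block_mxEur row_mxEl mxE.
Qed.

Lemma blk3_ur (A B : 'M[F]_r) (p q : 'I_n) (p' l : 'I_r) :
  (p : nat) = (p' : nat) -> (q : nat) = (r.+1 + l)%N -> blk3 A B p q = B p' l.
Proof.
move=> hp hq; rewrite /blk3 castmxE.
have -> : cast_ord (esym (sz3 r)) p = lshift (1 + r) p' by apply/val_inj.
have -> : cast_ord (esym (sz3 r)) q = rshift r (rshift 1 l) by apply/val_inj; rewrite /= hq; lia.
by rewrite block_mxEur row_mxEr.
Qed.

Lemma blk3_low (A B : 'M[F]_r) (p q : 'I_n) :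
  (r <= (p : nat))%N -> blk3 A B p q = (p == q)%:R.
Proof.
move=> hp; rewrite /blk3 castmxE.
have lp : ((p : nat) - r < 1 + r)%N by have := ordn p; lia.
have -> : cast_ord (esym (sz3 r)) p = rshift r (Ordinal lp) by apply/val_inj => /=; lia.
case: (ltnP ((q : nat)) r) => hq.
  have -> : cast_ord (esym (sz3 r)) q = lshift (1 + r) (Ordinal hq) by apply/val_inj.
  rewrite block_mxEdl mxE; case: eqP => // /(congr1 val) /= h; exfalso; lia.
have lq : ((q : nat) - r < 1 + r)%N by have := ordn q; lia.
have -> : cast_ord (esym (sz3 r)) q = rshift r (Ordinal lq) by apply/val_inj => /=; lia.
rewrite block_mxEdr mxE; congr (_%:R).
rewrite -val_eqE /= -(val_eqE p q) /=.
by do 2 case: eqP => //=; lia.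
Qed.

Lemma omega2 : omega F r *m omega F r = 1%:M.
Proof.
apply/matrixP => i j; rewrite !mxE (bigD1 (rev_ord i)) //= big1 ?addr0.
  rewrite !mxE.
  have hi := ltn_ord i; have hj := ltn_ord j.
  have -> : (i + (r - i.+1) == r.-1)%N by apply/eqP; lia.
  rewrite mul1r; congr (_%:R).
  rewrite -(val_eqE i j) /=.
  by do 2 case: eqP => //=; lia.
move=> t ht; rewrite !mxE; case: eqP => h; last by rewrite mul0r.
exfalso; move/negP: ht; apply; rewrite -val_eqE /=.
have := ltn_ord i; have := ltn_ord t; case: eqP => //; lia.
Qed.

Variables (a : 'rV[F]_(r.+1)) (b : 'rV[F]_r).

Lemma antiblk_col (t q : 'I_n) (j : 'I_r.+1) :
  (q : nat) = (r + j)%N -> antiblk a b t q = ((t : nat) == (j : nat))%:R * a 0 j.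
Proof.
move=> hq; rewrite /antiblk castmxE.
have -> : cast_ord (esym (sz2' r)) q = rshift r j by apply/val_inj.
case: (ltnP ((t : nat)) r.+1) => ht.
  have -> : cast_ord (esym (sz2 r)) t = lshift r (Ordinal ht) by apply/val_inj.
  rewrite block_mxEur mxE mulr_natl.
  have [e|ne] := eqVneq (t : nat) (j : nat).
    have -> : Ordinal ht = j by apply/val_inj.
    by rewrite eqxx.
  have -> : (Ordinal ht == j) = false by apply/negbTE; rewrite -val_eqE.
  by [].
have lt : ((t : nat) - r.+1 < r)%N by have := ordn t; lia.
have -> : cast_ord (esym (sz2 r)) t = rshift r.+1 (Ordinal lt) by apply/val_inj => /=; lia.
rewrite block_mxEdr mxE; case: eqP => [h|]; last by rewrite mul0r.
by have := ltn_ord j; lia.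
Qed.

Hypotheses (ha : forall i, a 0 i != 0) (hb : forall i, b 0 i != 0).

Lemma antiblk_unit : antiblk a b \in unitmx.
Proof.
pose Hinv := block_mx (0 : 'M[F]_(r, r.+1)) (omega F r *m diag_mx (\row_k (b 0 k)^-1))
   (diag_mx (\row_k (a 0 k)^-1)) (0 : 'M[F]_(r.+1, r)).
suff : antiblk a b *m castmx (sz2' r, sz2 r) Hinv = 1%:M by case/mulmx1_unit.
rewrite /antiblk castmx_mul mulmx_block.
rewrite !(mulmx0, mul0mx, addr0, add0r) !mulmx_diag.
rewrite -mulmxA (mulmxA (omega F r)) omega2 mul1mx mulmx_diag.
have -> : \row_j (a 0 j * (\row_k (a 0 k)^-1) 0 j) = const_mx 1.
  by apply/rowP => j; rewrite !mxE divff.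
have -> : \row_j (b 0 j * (\row_k (b 0 k)^-1) 0 j) = const_mx 1.
  by apply/rowP => j; rewrite !mxE divff.
by rewrite !diag_const_mx -scalar_mx_block castmx1.
Qed.

End Blk.

Section Val.
Variables (F : fieldType) (O : pred F) (varpi : F).
Hypothesis hF : padic_field O varpi.

Lemma O0 : O 0. Proof. by case: hF => [[]]. Qed.
Lemma O1 : O 1. Proof. by case: hF => [[_ []]]. Qed.
Lemma OB x y : O x -> O y -> O (x - y). Proof. by case: hF => [[_ [_ []]]] => h _ _; apply: h. Qed.
Lemma OM x y : O x -> O y -> O (x * y). Proof. by case: hF => [[_ [_ [_ h]]]] _; apply: h. Qed.
Lemma ON x : O x -> O (- x). Proof. by move=> hx; rewrite -sub0r; apply: OB => //; apply: O0. Qed.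
Lemma OD x y : O x -> O y -> O (x + y).
Proof. by move=> hx hy; rewrite -[y]opprK; apply: OB => //; apply: ON. Qed.
Lemma Ovarpi : O varpi. Proof. by case: hF => _ [[]]. Qed.
Lemma varpi_neq0 : varpi != 0. Proof. by case: hF => _ [[_ []]]. Qed.
Lemma notOinv : ~~ O varpi^-1. Proof. by case: hF => _ [[_ []]]. Qed.
Lemma Oexp k : O (varpi ^+ k).
Proof. elim: k => [|k ih]; first by rewrite expr0 O1. by rewrite exprS OM // Ovarpi. Qed.
Lemma expv_neq0 k : varpi ^+ k != 0. Proof. by rewrite expf_neq0 // varpi_neq0. Qed.

Lemma Odich x : x != 0 -> O x \/ O (x^-1 / varpi).
Proof.
move=> x0; case: hF => _ [_ [hd _]]; case: (hd x x0) => k [u [hu hu' ex]].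
case: k ex => k ex.
  by left; rewrite ex OM // Oexp.
right.
have u0 : u != 0 by apply: contraNneq x0 => u0; rewrite ex u0 mulr0.
have -> : x^-1 / varpi = varpi ^+ k * u^-1.
  rewrite ex; have -> : varpi ^ Negz k = (varpi ^+ k.+1)^-1 by [].
  rewrite exprS; field; rewrite u0 varpi_neq0 expv_neq0 //.
by rewrite OM // Oexp.
Qed.

Lemma Ounit w m : (0 < m)%N -> w != 0 -> inpm O varpi m (w - 1) -> O w^-1.
Proof.
move=> hm hw hi; case: (Odich (x := w^-1)); rewrite ?invr_eq0 // invrK => hw'.
have h1 : O ((w - 1) / varpi).
  have -> : (w - 1) / varpi = (w - 1) / varpi ^+ m * varpi ^+ m.-1.
    rewrite -mulrA; congr (_ * _).
    rewrite -(prednK hm) exprS invfM prednK //.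
    by rewrite -!mulrA mulVf ?mulr1 ?expv_neq0.
  by rewrite OM // Oexp.
have : O (w / varpi - (w - 1) / varpi) by apply: OB.
have -> : w / varpi - (w - 1) / varpi = varpi^-1 by rewrite -mulrBl opprB addrC subrK mul1r.
by move=> h; move: notOinv; rewrite h.
Qed.

Variables (C : numClosedFieldType) (psi : F -> C).
Hypothesis hpsi : add_char_conductor_O O varpi psi.

Lemma psi0 : psi 0 = 1. Proof. by case: hpsi => _ h _; apply: h; apply: O0. Qed.
Lemma psiD x y : psi (x + y) = psi x * psi y. Proof. by case: hpsi. Qed.
Lemma psi_neq0 x : psi x != 0.
Proof.
apply/negP => /eqP h; have := psiD x (- x); rewrite subrr psi0 h mul0r.
by move/eqP; rewrite oner_eq0.
Qed.

Lemma psi_triv z : (forall t, O t -> psi (t * z) = 1) -> O z.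
Proof.
move=> hz; case: (boolP (O z)) => // hnz; exfalso.
have z0 : z != 0 by apply: contraNneq hnz => ->; apply: O0.
case: (Odich z0) => [hz'|hz']; first by move: hnz; rewrite hz'.
case: hpsi => _ _ [x0 [hx0 hx0']].
have : psi ((varpi * x0 * (z^-1 / varpi)) * z) = 1 by apply: hz; apply: OM.
have -> : varpi * x0 * (z^-1 / varpi) * z = x0.
  by field; rewrite z0 varpi_neq0.
by move=> e; move: hx0'; rewrite e eqxx.
Qed.
End Val.

Section Gen.
Variables (F : fieldType) (O : pred F) (varpi : F).
Hypothesis hF : padic_field O varpi.
Variables (C : numClosedFieldType) (psi : F -> C).
Hypothesis hpsi : add_char_conductor_O O varpi psi.
Variable n : nat.

Lemma dJE m (j : 'M[F]_n) p q :
  (dpowinv varpi n m *m j *m dpow varpi n m) p q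
  = (varpi ^+ (2 * p * m))^-1 * j p q * varpi ^+ (2 * q * m).
Proof. by rewrite /dpowinv /dpow mul_mx_diag mxE mul_diag_mx !mxE. Qed.

Lemma inJ_of m (j : 'M[F]_n) : (forall p, j p p = 1) ->
  (forall p q, p != q -> O (j p q * varpi ^+ (2 * q * m) / varpi ^+ (2 * p * m) / varpi ^+ m)) ->
  inJ O varpi m j.
Proof.
move=> hd ho p q; rewrite /inpm dJE.
case: (eqVneq p q) => [<-|pq].
  by rewrite hd mulr1 mulVf ?(expv_neq0 hF) // mulr1n subrr mul0r (O0 hF).
rewrite mulr0n subr0.
have -> : (varpi ^+ (2 * p * m))^-1 * j p q * varpi ^+ (2 * q * m)
  = j p q * varpi ^+ (2 * q * m) / varpi ^+ (2 * p * m) by ring.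
exact: ho.
Qed.

Lemma mulmx_deltaE (M : 'M[F]_n) (al be p k : 'I_n) :
  (M *m delta_mx al be) p k = M p al * (k == be)%:R.
Proof.
rewrite mxE (bigD1 al) //= big1 ?addr0 => [|l hl]; first by rewrite mxE eqxx.
by rewrite mxE (negbTE hl) mulr0.
Qed.

Lemma r1E (M N : 'M[F]_n) (al be p q : 'I_n) :
  (M *m delta_mx al be *m N) p q = M p al * N be q.
Proof.
rewrite mxE (bigD1 be) //= big1 ?addr0 => [|l hl]; first by rewrite mulmx_deltaE eqxx mulr1.
by rewrite mulmx_deltaE (negbTE hl) mulr0 mul0r.
Qed.

Lemma psiN_row (X : 'M[F]_n) (i0 j0 : 'I_n) (d : 'I_n -> F) :
  (j0 : nat) = i0.+1 -> (forall p q, X p q = (p == q)%:R + (p == i0)%:R * d q) ->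
  psiN psi X = psi (d j0).
Proof.
move=> hj hX; rewrite /psiN; congr psi.
have e1 : \sum_(j < n | (j : nat) == i0.+1) X i0 j = d j0.
  rewrite (big_pred1 j0) => [|j]; last by rewrite /= -val_eqE /= hj.
  rewrite hX eqxx mul1r.
  have -> : (i0 == j0) = false.
    by apply/negbTE; rewrite -val_eqE /= hj; apply/eqP; lia.
  by rewrite add0r.
rewrite (bigD1 i0) //= e1 big1 ?addr0 //.
move=> i hi; rewrite big1 // => j /eqP hj'; rewrite hX (negbTE hi) mul0r addr0.
have -> : (i == j) = false by apply/negbTE; rewrite -val_eqE /= hj'; apply/eqP; lia.
by [].
Qed.

Lemma psiN_0 (X : 'M[F]_n) : (forall p q : 'I_n, (q : nat) = p.+1 -> X p q = 0) ->
  psiN psi X = 1.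
Proof.
move=> hX; rewrite /psiN big1 ?(psi0 hF hpsi) // => i _.
by rewrite big1 // => j /eqP hj; apply: hX.
Qed.

Lemma uu1 : upper_unipotent (1%:M : 'M[F]_n).
Proof.
split=> [i j ij|i]; last by rewrite mxE eqxx.
by rewrite mxE; case: eqP => // e; move: ij; rewrite e ltnn.
Qed.

Lemma lb1 : lower_borel (1%:M : 'M[F]_n).
Proof.
split=> [|i j ij]; first exact: unitmx1.
by rewrite mxE; case: eqP => // e; move: ij; rewrite e ltnn.
Qed.

Lemma inJ1 m : inJ O varpi m (1%:M : 'M[F]_n).
Proof.
apply: inJ_of => [p|p q pq]; first by rewrite mxE eqxx.
by rewrite mxE (negbTE pq) !mul0r (O0 hF).
Qed.

Lemma psiN1 : psiN psi (1%:M : 'M[F]_n) = 1.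
Proof.
apply: psiN_0 => p q hq; rewrite mxE.
have -> : (p == q) = false by apply/negbTE; rewrite -val_eqE /= hq; apply/eqP; lia.
by [].
Qed.

Variables (V : lmodType C) (rho : 'M[F]_n -> V -> V) (lam : V -> C) (m : nat) (W : 'M[F]_n -> C).
Hypotheses (hs : smooth_rep O varpi rho) (hw : whittaker_functional psi rho lam)
  (hh : howe_vector O varpi psi rho lam m W).

Lemma WL x g : upper_unipotent x -> g \in unitmx -> W (x *m g) = psiN psi x * W g.
Proof.
move=> hx hg; case: hh => [[v hv] _ _]; case: hs => _ _ hmul _; case: hw => _ _ hlam.
have xu : x \in unitmx.
  case: hx => hl hd; rewrite unitmxE -det_tr det_trig.
    by rewrite (eq_bigr (fun _ => 1)) ?prodr_const ?expr1n ?unitr1 // => i _; rewrite mxE hd.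
  by apply/is_trig_mxP => i j ij; rewrite mxE hl.
rewrite hv ?hv ?unitmx_mul ?xu ?hg // hmul // hlam //.
Qed.

Lemma WR g nn : g \in unitmx -> upper_unipotent nn -> inJ O varpi m nn ->
  W (g *m nn) = psiN psi nn * W g.
Proof.
move=> hg hn hj; case: hh => _ _ h.
by rewrite -(h g 1%:M nn hg lb1 (inJ1 m) hn hj) mul1mx.
Qed.

Lemma WR' g bb : g \in unitmx -> lower_borel bb -> inJ O varpi m bb -> W (g *m bb) = W g.
Proof.
move=> hg hb hj; case: hh => _ _ h.
by rewrite -[RHS]mul1r -psiN1 -(h g bb 1%:M hg hb hj uu1 (inJ1 m)) mulmx1.
Qed.
End Gen.

Section Main.
Variables (F : fieldType) (O : pred F) (varpi : F).
Hypothesis hF : padic_field O varpi.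
Variables (C : numClosedFieldType) (psi : F -> C).
Hypothesis hpsi : add_char_conductor_O O varpi psi.
Variable r : nat.
Local Notation n := (r.*2.+1).
Variables (V : lmodType C) (rho : 'M[F]_n -> V -> V) (lam : V -> C) (m : nat) (W : 'M[F]_n -> C).
Hypotheses (hs : smooth_rep O varpi rho) (hw : whittaker_functional psi rho lam)
  (hh : howe_vector O varpi psi rho lam m W) (hm : (0 < m)%N).
Variables (a : 'rV[F]_(r.+1)) (b : 'rV[F]_r) (ur Y : 'M[F]_r).
Hypotheses (ha : forall i, a 0 i != 0) (hb : forall i, b 0 i != 0) (hur : upper_unipotent ur).

Local Notation h := (antiblk a b).
Definition Yc (i : nat) : 'M[F]_r := \matrix_(p, l) if ((l : nat) < i)%N then 0 else Y p l.
Definition Kc i := blk3 ur (ur *m Yc i).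
Definition Kinv i := blk3 (invmx ur) (- Yc i).
Definition gg i := h *m Kc i.

Lemma ur_unit : ur \in unitmx.
Proof.
case: hur => hl hd; rewrite unitmxE -det_tr det_trig.
  by rewrite (eq_bigr (fun _ => 1)) ?prodr_const ?expr1n ?unitr1 // => i _; rewrite mxE hd.
by apply/is_trig_mxP => i j ij; rewrite mxE hl.
Qed.

Lemma KK i : Kc i *m Kinv i = 1%:M.
Proof.
by rewrite /Kc /Kinv blk3M mulmxV ?ur_unit // mulmxN addNr blk3_1.
Qed.

Lemma KK' i : Kinv i *m Kc i = 1%:M.
Proof. exact: mulmx1C (KK i). Qed.

Lemma Kc_unit i : Kc i \in unitmx.
Proof. by case: (mulmx1_unit (KK i)). Qed.

Lemma gg_unit i : gg i \in unitmx.
Proof. by rewrite unitmx_mul antiblk_unit // Kc_unit. Qed.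

Lemma ordn' (p : 'I_n) : ((p : nat) <= r + r)%N.
Proof. have h := ltn_ord p; have e : (r.*2 = r + r)%N by rewrite addnn. lia. Qed.

Lemma inordn k : (k <= r + r)%N -> ((inord k : 'I_n) : nat) = k.
Proof.
move=> hk; rewrite inordK //.
have e : (r.*2 = r + r)%N by rewrite addnn.
rewrite e ltnS //.
Qed.

Lemma inordr k : (k <= r)%N -> ((inord k : 'I_r.+1) : nat) = k.
Proof. by move=> hk; rewrite inordK. Qed.

Lemma Kc_col (i : 'I_r) (t : 'I_n) :
  Kc i t (inord (r + i)) = (t == inord (r + i) :> 'I_n)%:R.
Proof.
have hi := ltn_ord i.
have hal : ((inord (r + i) : 'I_n) : nat) = (r + i)%N by rewrite inordn; lia.
case: (ltnP (t : nat) r) => ht.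
  have -> : (t == inord (r + i) :> 'I_n) = false.
    by apply/negbTE; rewrite -val_eqE /= hal; apply/eqP; lia.
  case: (posnP i) => i0.
    by rewrite /Kc (blk3_um _ _ ht) // hal i0 addn0.
  have hl : (i.-1 < r)%N by lia.
  rewrite /Kc (@blk3_ur _ _ ur (ur *m Yc i) t _ (Ordinal ht) (Ordinal hl)) //=; last by rewrite hal; lia.
  rewrite mxE big1 // => s _; rewrite mxE /=.
  have -> : (i.-1 < i)%N by lia.
  by rewrite mulr0.
by rewrite /Kc blk3_low.
Qed.

Lemma gg_col (i : 'I_r) (p : 'I_n) :
  gg i p (inord (r + i)) = ((p : nat) == i)%:R * a 0 (inord i).
Proof.
have hi := ltn_ord i.
rewrite /gg mxE (bigD1 (inord (r + i))) //= big1 ?addr0 => [|t ht]; last first.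
  by rewrite Kc_col (negbTE ht) mulr0.
rewrite Kc_col eqxx mulr1 (@antiblk_col _ _ a b p _ (inord i)) //.
  by rewrite inordr //; lia.
by rewrite inordn ?inordr; lia.
Qed.

Lemma invh_col (j : 'I_r.+1) (t q : 'I_n) : (q : nat) = j ->
  invmx h t q = (t == inord (r + j) :> 'I_n)%:R / a 0 j.
Proof.
move=> hq; have hj := ltn_ord j.
have e := congr1 (fun M : 'M[F]_n => M t (inord (r + j))) (mulVmx (antiblk_unit ha hb)).
move: e => /=; rewrite mxE (bigD1 q) //= big1 ?addr0 => [|s hs0]; last first.
  rewrite (@antiblk_col _ _ a b s _ j); last by rewrite inordn; lia.
  have -> : ((s : nat) == j) = false by apply/negbTE; rewrite -hq val_eqE.
  by rewrite mul0r mulr0.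
rewrite (@antiblk_col _ _ a b q _ j); last by rewrite inordn; lia.
rewrite hq eqxx mul1r mxE => <-.
by rewrite mulfK.
Qed.

Lemma N_col (i : nat) (be : 'I_n) (j : 'I_r.+1) (q : 'I_n) : (q : nat) = j ->
  (Kinv i *m invmx h) be q = Kinv i be (inord (r + j)) / a 0 j.
Proof.
move=> hq; rewrite mxE (bigD1 (inord (r + j))) //= big1 ?addr0 => [|t ht].
  by rewrite (invh_col _ hq) eqxx mulr1n mul1r.
by rewrite (invh_col _ hq) (negbTE ht) mul0r mulr0.
Qed.


Lemma step_gen (i : 'I_r) (be : 'I_n) (c : F) :
  let al : 'I_n := inord (r + i) in
  let N := Kinv i *m invmx h in
  let x := 1%:M + c *: (gg i *m delta_mx al be *m N) in
  x *m gg i = gg i *m (1%:M + c *: delta_mx al be) /\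
  (forall p q, x p q = (p == q)%:R + ((p : nat) == i)%:R * (c * a 0 (inord i) * N be q)).
Proof.
move=> al N x; split.
  rewrite /x mulmxDl mulmxDr mul1mx mulmx1 -scalemxAl -scalemxAr; congr (_ + c *: _).
  have NG : N *m gg i = 1%:M.
    by rewrite /N /gg mulmxA -(mulmxA (Kinv i)) mulVmx ?antiblk_unit // mulmx1 KK'.
  by rewrite -(mulmxA (gg i *m delta_mx al be)) NG mulmx1.
move=> p q; rewrite /x mxE [X in _ + X]mxE r1E gg_col mxE; ring.
Qed.

Lemma elemE (al be p q : 'I_n) (c : F) :
  (1%:M + c *: delta_mx al be) p q = (p == q)%:R + (p == al)%:R * (c * (q == be)%:R).
Proof.
rewrite !mxE; case: (p == al); case: (q == be) => /=;
  by rewrite ?mulr1 ?mulr0 ?mul1r ?mul0r ?mulr1n ?mulr0n.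
Qed.

Lemma elem_inJ (al be : 'I_n) (c : F) : al != be ->
  O (c * varpi ^+ (2 * be * m) / varpi ^+ (2 * al * m) / varpi ^+ m) ->
  inJ O varpi m (1%:M + c *: delta_mx al be).
Proof.
move=> ab hc; apply: (inJ_of hF) => [p|p q pq].
  rewrite elemE eqxx; case: eqP => [->|_]; last by rewrite mul0r addr0.
  by rewrite (negbTE ab) mulr0n mulr0 mulr0 addr0.
rewrite elemE (negbTE pq) add0r.
case: eqP => [->|]; last by rewrite !mul0r (O0 hF).
case: eqP => [->|]; last by rewrite !mulr0 !mul0r (O0 hF).
by rewrite mulr1n mul1r mulr1.
Qed.

Lemma elem_lb (al be : 'I_n) (c : F) : (be < al)%N -> lower_borel (1%:M + c *: delta_mx al be).
Proof.
move=> ba; have ab : al != be by rewrite -val_eqE /=; apply/eqP; lia.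
split.
  suff : (1%:M + c *: delta_mx al be) *m (1%:M - c *: delta_mx al be) = 1%:M by case/mulmx1_unit.
  rewrite mulmxDl !mul1mx mulmxBr mulmx1 -scalemxAl -scalemxAr scalerA mul_delta_mx_0.
    by rewrite scaler0 subr0 subrK.
  by rewrite eq_sym.
move=> p q pq; rewrite elemE.
have -> : (p == q) = false by apply/negbTE; rewrite -val_eqE /=; apply/eqP; lia.
case: eqP => [e|]; last by rewrite mul0r addr0.
case: eqP => [e'|]; last by rewrite mulr0 mulr0 addr0.
by move: pq; rewrite e e'; lia.
Qed.

Lemma elem_uu (al be : 'I_n) (c : F) : (al < be)%N -> upper_unipotent (1%:M + c *: delta_mx al be).
Proof.
move=> ab; have ab' : al != be by rewrite -val_eqE /=; apply/eqP; lia.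
split=> [p q qp|p]; rewrite elemE.
  have -> : (p == q) = false by apply/negbTE; rewrite -val_eqE /=; apply/eqP; lia.
  case: eqP => [e|]; last by rewrite mul0r addr0.
  case: eqP => [e'|]; last by rewrite mulr0 mulr0 addr0.
  by move: qp; rewrite e e'; lia.
rewrite eqxx; case: eqP => [e|]; last by rewrite mul0r addr0.
by rewrite e (negbTE ab') mulr0 mulr0 addr0.
Qed.


Lemma Kinv_N_zero (i k : 'I_r) (q : 'I_n) : ((q : nat) <= i)%N ->
  (Kinv i *m invmx h) (inord k) q = 0.
Proof.
move=> hq; have hi := ltn_ord i; have hk := ltn_ord k.
have hj : ((inord q : 'I_r.+1) : nat) = q by rewrite inordr //; lia.
rewrite (N_col _ _ (esym hj)) hj.
have hbe : ((inord k : 'I_n) : nat) = k by rewrite inordn //; lia.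
have hal : ((inord (r + q) : 'I_n) : nat) = (r + q)%N by rewrite inordn //; lia.
case: (posnP q) => q0.
  by rewrite /Kinv (blk3_um _ _ (p := inord k)) ?mul0r // ?hbe // hal q0 addn0.
have hl : ((q : nat).-1 < r)%N by lia.
rewrite /Kinv (@blk3_ur _ _ _ _ (inord k) (inord (r + q)) k (Ordinal hl)) //; last by rewrite hal /=; lia.
rewrite !mxE /=; have -> : ((q : nat).-1 < i)%N by lia.
by rewrite oppr0 mul0r.
Qed.

Lemma Kinv_N_next (i k : 'I_r) :
  (Kinv i *m invmx h) (inord k) (inord i.+1) = - Y k i / a 0 (inord i.+1).
Proof.
have hi := ltn_ord i; have hk := ltn_ord k.
have hj : ((inord i.+1 : 'I_r.+1) : nat) = i.+1 by rewrite inordr //; lia.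
have hj' : ((inord i.+1 : 'I_n) : nat) = i.+1 by rewrite inordn //; lia.
rewrite (N_col _ _ (etrans hj' (esym hj))) hj.
have hbe : ((inord k : 'I_n) : nat) = k by rewrite inordn //; lia.
have hal : ((inord (r + i.+1) : 'I_n) : nat) = (r + i.+1)%N by rewrite inordn //; lia.
rewrite /Kinv (@blk3_ur _ _ _ _ (inord k) (inord (r + i.+1)) k i) //; last by rewrite hal /=; lia.
by rewrite !mxE ltnn.
Qed.

Lemma eq_inord_nat (p : 'I_n) (i : nat) : (i <= r + r)%N ->
  ((p : nat) == i) = (p == inord i).
Proof. by move=> hi; rewrite -val_eqE /= inordn. Qed.

Lemma type1 (i k : 'I_r) : W (gg i) != 0 ->
  O (Y k i * a 0 (inord i) / a 0 (inord i.+1) * varpi ^+ ((2 * (r + i - k)).+1 * m)).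
Proof.
move=> W0; apply: (psi_triv hF hpsi) => t ht.
have hi := ltn_ord i; have hk := ltn_ord k.
set e := ((2 * (r + i - k)).+1 * m)%N.
set c := - (t * varpi ^+ e).
set al : 'I_n := inord (r + i).
set be : 'I_n := inord k.
case: (step_gen i be c) => hx hxe.
set x := (1%:M + c *: _) in hx hxe.
have hxu : upper_unipotent x.
  split=> [p q qp|p]; rewrite hxe.
    have -> : (p == q) = false by apply/negbTE; rewrite -val_eqE /=; apply/eqP; lia.
    case: (eqVneq (p : nat) i) => [e'|ne]; last by rewrite mul0r addr0.
    by rewrite Kinv_N_zero ?mulr0 ?addr0 //; lia.
  rewrite eqxx; case: (eqVneq (p : nat) i) => [e'|ne]; last by rewrite mul0r addr0.
  by rewrite Kinv_N_zero ?mulr0 ?addr0 //; lia.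
have hpx : psiN psi x = psi (c * a 0 (inord i) * (- Y k i / a 0 (inord i.+1))).
  rewrite -Kinv_N_next.
  apply: (@psiN_row _ _ psi _ x (inord i) (inord i.+1)
           (fun q => c * a 0 (inord i) * (Kinv i *m invmx h) be q)).
    by rewrite !inordn //; lia.
  by move=> p q; rewrite hxe eq_inord_nat //; lia.
have hj1 : W (gg i *m (1%:M + c *: delta_mx al be)) = W (gg i).
  apply: (WR' hF hpsi hh (gg_unit i)).
    by apply: elem_lb; rewrite /al /be !inordn //; lia.
  apply: elem_inJ.
    by rewrite -val_eqE /= /al /be !inordn //; apply/eqP; lia.
  rewrite /al /be !inordn; try lia.
  have -> : c * varpi ^+ (2 * k * m) / varpi ^+ (2 * (r + i) * m) / varpi ^+ m = - t.
    have E : varpi ^+ e * varpi ^+ (2 * k * m) = varpi ^+ (2 * (r + i) * m) * varpi ^+ m.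
      rewrite -!exprD /e; congr (_ ^+ _).
      have -> : (r + i = (r + i - k) + k)%N by lia.
      rewrite addnK; ring.
    have -> : c * varpi ^+ (2 * k * m) / varpi ^+ (2 * (r + i) * m) / varpi ^+ m
      = - t * (varpi ^+ e * varpi ^+ (2 * k * m)) / (varpi ^+ (2 * (r + i) * m) * varpi ^+ m).
      by rewrite /c invfM; ring.
    by rewrite E mulfK // mulf_neq0 // (expv_neq0 hF).
  by apply: (ON hF).
have := WL hs hw hh hxu (gg_unit i); rewrite hx hj1 hpx.
rewrite -{1}[W (gg i)]mul1r => E1; have E2 := mulIf W0 E1.
rewrite E2 /c; congr psi; field; by rewrite ha.
Qed.


Lemma Kinv_N2 (i : 'I_r) (q : 'I_n) : ((q : nat) <= r)%N ->
  (Kinv i *m invmx h) (inord (r + i).+1) q = ((q : nat) == i.+1)%:R / a 0 (inord q).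
Proof.
move=> hq; have hi := ltn_ord i.
have hj : ((inord q : 'I_r.+1) : nat) = q by rewrite inordr.
rewrite (N_col _ _ (esym hj)) hj /Kinv blk3_low; last by rewrite inordn //; lia.
congr (_%:R / _); rewrite -val_eqE /= !inordn; try lia.
Qed.

Lemma type2 (i : 'I_r) : W (gg i) != 0 ->
  inpm O varpi m (a 0 (inord i) / a 0 (inord i.+1) - 1).
Proof.
move=> W0; rewrite /inpm; apply: (psi_triv hF hpsi) => t ht.
have hi := ltn_ord i.
set c := t / varpi ^+ m.
set al : 'I_n := inord (r + i).
set be : 'I_n := inord (r + i).+1.
have hal : (al : nat) = (r + i)%N by rewrite inordn //; lia.
have hbe : (be : nat) = (r + i).+1 by rewrite inordn //; lia.
case: (step_gen i be c) => hx hxe.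
set x := (1%:M + c *: _) in hx hxe.
have hxu : upper_unipotent x.
  split=> [p q qp|p]; rewrite hxe.
    have -> : (p == q) = false by apply/negbTE; rewrite -val_eqE /=; apply/eqP; lia.
    case: (eqVneq (p : nat) i) => [e'|ne]; last by rewrite mul0r addr0.
    rewrite Kinv_N2; last by lia.
    have -> : ((q : nat) == i.+1) = false by apply/eqP; lia.
    by rewrite !mul0r !mulr0 addr0.
  rewrite eqxx; case: (eqVneq (p : nat) i) => [e'|ne]; last by rewrite mul0r addr0.
  rewrite Kinv_N2; last by lia.
  have -> : ((p : nat) == i.+1) = false by apply/eqP; lia.
  by rewrite !mul0r !mulr0 addr0.
have hi1 : ((inord i.+1 : 'I_n) : nat) = i.+1 by rewrite inordn //; lia.
have hpx : psiN psi x = psi (c * a 0 (inord i) * (1 / a 0 (inord i.+1))).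
  have -> : 1 / a 0 (inord i.+1) = (Kinv i *m invmx h) be (inord i.+1).
    rewrite Kinv_N2; last by lia.
    rewrite hi1 eqxx; congr (_ / a 0 _); apply/val_inj; rewrite /= !inordr //; lia.
  apply: (@psiN_row _ _ psi _ x (inord i) (inord i.+1)
           (fun q => c * a 0 (inord i) * (Kinv i *m invmx h) be q)).
    by rewrite !inordn //; lia.
  by move=> p q; rewrite hxe eq_inord_nat //; lia.
have hju : upper_unipotent (1%:M + c *: delta_mx al be) by apply: elem_uu; lia.
have hjJ : inJ O varpi m (1%:M + c *: delta_mx al be).
  apply: elem_inJ; first by rewrite -val_eqE /=; apply/eqP; lia.
  rewrite hal hbe.
  have -> : c * varpi ^+ (2 * (r + i).+1 * m) / varpi ^+ (2 * (r + i) * m) / varpi ^+ m = t.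
    have -> : (2 * (r + i).+1 * m = 2 * (r + i) * m + m + m)%N by ring.
    rewrite !exprD /c; field; by rewrite !(expv_neq0 hF).
  exact: ht.
have hpj : psiN psi (1%:M + c *: delta_mx al be) = psi c.
  rewrite (@psiN_row _ _ psi _ _ al be (fun q => c * (q == be)%:R)); first by rewrite eqxx mulr1.
    by rewrite hal hbe.
  by move=> p q; rewrite elemE.
have := WL hs hw hh hxu (gg_unit i); rewrite hx (WR hF hh (gg_unit i) hju hjJ) hpx hpj.
move=> E1; have E2 := mulIf W0 E1.
have E3 : psi (c * a 0 (inord i) * (1 / a 0 (inord i.+1)))
   = psi c * psi (t * ((a 0 (inord i) / a 0 (inord i.+1) - 1) / varpi ^+ m)).
  rewrite -(psiD hpsi); congr psi; rewrite /c; field; by rewrite ha (expv_neq0 hF).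
move: E2; rewrite E3 => E4.
apply: (mulfI (psi_neq0 hF hpsi c)).
by rewrite mulr1 -E4.
Qed.


Lemma blk3_1_id (Cm : 'M[F]_r) (p q : 'I_n) : ((q : nat) <= r)%N || (r <= p)%N ->
  blk3 1%:M Cm p q = (p == q)%:R.
Proof.
case: (ltnP (p : nat) r) => hp /= hq; last by rewrite blk3_low.
case: (ltnP (q : nat) r) => hq'.
  rewrite (@blk3_ul _ _ _ _ p q (Ordinal hp) (Ordinal hq')) // mxE.
  by congr (_%:R); rewrite -!val_eqE.
rewrite blk3_um //; last by lia.
have -> : (p == q) = false by apply/negbTE; rewrite -val_eqE /=; apply/eqP; lia.
by [].
Qed.

Lemma blk3_1_uu (Cm : 'M[F]_r) : upper_unipotent (blk3 1%:M Cm).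
Proof.
split=> [p q qp|p].
  rewrite blk3_1_id; last by apply/orP; case: (ltnP (p : nat) r); [left; lia|right].
  have -> : (p == q) = false by apply/negbTE; rewrite -val_eqE /=; apply/eqP; lia.
  by [].
rewrite blk3_1_id ?eqxx //.
by apply/orP; case: (ltnP (p : nat) r); [left; lia|right].
Qed.

Lemma blk3_1_psi (Cm : 'M[F]_r) : psiN psi (blk3 1%:M Cm) = 1.
Proof.
apply: (psiN_0 hF hpsi) => p q hq.
rewrite blk3_1_id; last by apply/orP; case: (ltnP (p : nat) r); [left; lia|right].
have -> : (p == q) = false by apply/negbTE; rewrite -val_eqE /=; apply/eqP; lia.
by [].
Qed.

Definition bnd (Cm : 'M[F]_r) (k l : 'I_r) :=
  Cm k l * varpi ^+ (2 * (r.+1 + l) * m) / varpi ^+ (2 * k * m) / varpi ^+ m.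

Lemma blk3_1_inJ (Cm : 'M[F]_r) : (forall k l, O (bnd Cm k l)) ->
  inJ O varpi m (blk3 1%:M Cm).
Proof.
move=> hC; apply: (inJ_of hF) => [p|p q pq].
  rewrite blk3_1_id ?eqxx //.
  by apply/orP; case: (ltnP (p : nat) r); [left; lia|right].
case: (ltnP r (q : nat)) => hq; last first.
  by rewrite blk3_1_id ?hq // (negbTE pq) !mul0r (O0 hF).
case: (ltnP (p : nat) r) => hp; last first.
  by rewrite blk3_1_id ?hp ?orbT // (negbTE pq) !mul0r (O0 hF).
have hl : ((q : nat) - r.+1 < r)%N by have := ordn' q; lia.
rewrite (@blk3_ur _ _ _ _ p q (Ordinal hp) (Ordinal hl)) //=; last by lia.
have := hC (Ordinal hp) (Ordinal hl); rewrite /bnd /=.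
by have -> : (r.+1 + (q - r.+1) = q)%N by lia.
Qed.

Lemma Yc0 : Yc 0 = Y.
Proof. by apply/matrixP => p l; rewrite mxE. Qed.

Lemma Ycr : Yc r = 0.
Proof. by apply/matrixP => p l; rewrite !mxE ltn_ord. Qed.

Lemma gg_split (i : nat) : gg i = gg i.+1 *m blk3 1%:M (Yc i - Yc i.+1).
Proof.
by rewrite /gg -mulmxA /Kc blk3M mulmx1 -mulmxDr subrK.
Qed.

Lemma unit_ratio (i : 'I_r) : W (gg i) != 0 -> O ((a 0 (inord i) / a 0 (inord i.+1))^-1).
Proof.
move=> W0; apply: (Ounit hF hm) (type2 W0).
by rewrite mulf_neq0 ?invr_eq0 ?ha.
Qed.

Lemma col_bnd (i k : 'I_r) : W (gg i) != 0 -> O (bnd Y k i).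
Proof.
move=> W0; have hk := ltn_ord k; have hi := ltn_ord i.
have := OM hF (type1 k W0) (unit_ratio W0).
have -> : Y k i * a 0 (inord i) / a 0 (inord i.+1) * varpi ^+ ((2 * (r + i - k)).+1 * m) *
   (a 0 (inord i) / a 0 (inord i.+1))^-1 = Y k i * varpi ^+ ((2 * (r + i - k)).+1 * m).
  by field; rewrite !ha.
rewrite /bnd.
have -> : Y k i * varpi ^+ (2 * (r.+1 + i) * m) / varpi ^+ (2 * k * m) / varpi ^+ m
  = Y k i * (varpi ^+ ((2 * (r + i - k)).+1 * m) * (varpi ^+ (2 * k * m) * varpi ^+ m))
     / varpi ^+ (2 * k * m) / varpi ^+ m.
  rewrite -!exprD; congr (_ * _ ^+ _ / _ / _).
  have hd : (r + i = (r + i - k) + k)%N by lia.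
  move: (r + i - k)%N hd => d hd.
  have -> : (r.+1 + i = d + k + 1)%N by lia.
  ring.
have nz := expv_neq0 hF.
have -> : Y k i * (varpi ^+ ((2 * (r + i - k)).+1 * m) * (varpi ^+ (2 * k * m) * varpi ^+ m))
     / varpi ^+ (2 * k * m) / varpi ^+ m = Y k i * varpi ^+ ((2 * (r + i - k)).+1 * m).
  by field; rewrite !nz.
by [].
Qed.


Lemma main_ind : W (gg 0) != 0 -> forall i, (i <= r)%N ->
  W (gg i) = W (gg 0) /\
  (forall j : 'I_r, (j < i)%N ->
     inpm O varpi m (a 0 (inord j) / a 0 (inord j.+1) - 1) /\ forall k, O (bnd Y k j)).
Proof.
move=> W0; elim => [_|i IH hi]; first by split => // j; rewrite ltn0.
have [E P] := IH (ltnW hi).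
pose io : 'I_r := Ordinal hi.
have Wi : W (gg io) != 0 by rewrite /= E.
have hbd := fun k => col_bnd k Wi.
split.
  rewrite -E (gg_split i) (WR hF hh (gg_unit i.+1) (blk3_1_uu _)) ?blk3_1_psi ?mul1r //.
  apply: blk3_1_inJ => k l; rewrite /bnd !mxE.
  case: (ltngtP (l : nat) i) => hl.
  - have -> : ((l : nat) < i.+1)%N by lia.
    by rewrite subrr !mul0r (O0 hF).
  - have -> : ((l : nat) < i.+1)%N = false by apply/negbTE; lia.
    by rewrite subrr !mul0r (O0 hF).
  - have -> : ((l : nat) < i.+1)%N by lia.
    rewrite subr0; have -> : l = io by apply/val_inj.
    exact: hbd.
move=> j; rewrite ltnS leq_eqVlt => /orP [/eqP ej|lj]; last exact: P.
have -> : j = io by apply/val_inj.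
by split; [exact: type2 Wi|exact: hbd].
Qed.

End Main.

End Helpers.
Import Helpers.

Theorem proposition3p4 (F : fieldType) (O : pred F) (varpi : F)
    (C : numClosedFieldType) (psi : F -> C) (r : nat)
    (V : lmodType C) (rho : 'M[F]_(r.*2.+1) -> V -> V) (lam : V -> C)
    (m : nat) (W : 'M[F]_(r.*2.+1) -> C)
    (a : 'rV[F]_(r.+1)) (a' b : 'rV[F]_r) (ur u : 'M[F]_r) :
  padic_field O varpi ->
  add_char_conductor_O O varpi psi ->
  smooth_rep O varpi rho ->
  irreducible_rep rho ->
  unitarizable rho ->
  whittaker_functional psi rho lam ->
  (0 < m)%N ->
  howe_vector O varpi psi rho lam m W ->
  (forall i, a 0 i != 0) -> (forall i, a' 0 i != 0) -> (forall i, b 0 i != 0) ->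
  upper_unipotent ur -> upper_unipotent u ->
  W (antiblk a b *m blk3 ur (ur *m omega F r *m diag_mx a' *m u)) != 0 ->
  [/\ (forall i : 'I_r,
         inpm O varpi m (a 0 (widen_ord (leqnSn r) i) / a 0 (lift ord0 i) - 1)),
      inJ O varpi m (blk3 1%:M (omega F r *m diag_mx a' *m u)) &
      W (antiblk a b *m blk3 ur (ur *m omega F r *m diag_mx a' *m u))
        = W (antiblk a b *m blk3 ur 0)].
Proof.
move=> hF hpsi hs _ _ hw hm hh ha _ hb hur _ W0.
set Y := omega F r *m diag_mx a' *m u.
have eY : ur *m omega F r *m diag_mx a' *m u = ur *m Y by rewrite /Y !mulmxA.
rewrite eY in W0 *.
have g0 : antiblk a b *m blk3 ur (ur *m Y) = gg a b ur Y 0 by rewrite /gg /Kc Yc0.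
have gr : antiblk a b *m blk3 ur 0 = gg a b ur Y r by rewrite /gg /Kc Ycr mulmx0.
rewrite g0 in W0; rewrite g0 gr.
have [E P] := main_ind hF hpsi hs hw hh hm ha hb hur W0 (leqnn r).
split.
- move=> i; have [R _] := P i (ltn_ord i).
  have e1 : widen_ord (leqnSn r) i = inord i.
    by apply: val_inj; rewrite /= inordK // ltnS ltnW.
  have e2 : lift ord0 i = inord i.+1.
    by apply: val_inj; rewrite /= /bump /= add1n inordK // ltnS ltn_ord.
  rewrite e1 e2.
  exact: R.
- apply: (blk3_1_inJ hF hm) => k l.
  by have [_ Q] := P l (ltn_ord l); apply: Q.
- by rewrite E.
Qed.
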